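(* Let $L\subseteq G_3$ be the subgroup of elements that fix every edge sticker and send every corner cubelet back to its own position. Let $\sigma:S_8\to S_{12}$ be the sign map sending even permutations to the identity and odd permutations to the transposition $(b\,c)$ of the edge positions $b,c$, and let $S=\{(\sigma(p),p):p\in S_8\}\subseteq S_{12}\times S_8$. Then $G_3$ contains a subgroup of the form $L\rtimes Q_S$, where $Q_S\subseteq G_3$ is a subgroup with $Q_S\cap\ker\alpha=1$ and $\alpha(Q_S)=S$, and $\psi$ restricts to an isomorphism from $L\rtimes Q_S$ onto $G_2$. In particular the surjection $\psi:G_3\to G_2$ splits and $G_2$ is isomorphic to a subgroup of $G_3$.
   Context: The $3\times3\times3$ Rubik's cube consists of 8 corner cubelets (3 stickers each), 12 edge cubelets (2 stickers each) and 6 face-center cubelets. Corner positions are numbered 1 = top-front-left, 2 = top-front-right, 3 = top-back-left, 4 = top-back-right, 5 = bottom-front-left, 6 = bottom-front-right, 7 = bottom-back-left, 8 = bottom-back-right; edge positions are labeled $a$ = top-back, $b$ = top-right, $c$ = top-front, $d$ = top-left, $e$ = back-left, $f$ = back-right, $g$ = front-right, $h$ = front-left, $i$ = bottom-back, $j$ = bottom-right, $k$ = bottom-front, $l$ = bottom-left. $G_3$ is the group of permutations of the 48 corner and edge stickers generated by the six moves $u_3,d_3,f_3,b_3,l_3,r_3$, which rotate respectively the top, bottom, front, back, left, right layer of nine cubelets by $90^\circ$ clockwise as seen by an observer outside the cube facing that face. The $2\times2\times2$ cube has 8 corner cubelets (24 stickers) with the same corner numbering, and $G_2$ is the group of permutations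 of its 24 stickers generated by the analogous face quarter-turns $u_2,d_2,f_2,b_2,l_2,r_2$. $\psi:G_3\to G_2$ is the (surjective) homomorphism with $u_3\mapsto u_2$, $d_3\mapsto d_2$, etc. (it records the action on the corner stickers). $\phi:G_2\to S_8$ records the permutation of corner positions, $\beta:G_3\to S_{12}$ records the permutation of the edge positions $\{a,\dots,l\}$, and $\alpha=(\beta,\phi\circ\psi):G_3\to S_{12}\times S_8$. *)

(* Defs.v *)
From mathcomp Require Import all_boot all_fingroup.
From Stdlib Require Import ZArith.
Set Implicit Arguments. Unset Strict Implicit. Unset Printing Implicit Defensive.

(* Geometry.  The cube is [-1,1]^3 with x = right, y = up, z = front  *)
(* (towards the viewer): a right-handed frame.  A coordinate in       *)
(* {-1,0,1} is encoded by i : 'I_3 as the integer i - 1.              *)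

Definition vec := ('I_3 * 'I_3 * 'I_3)%type.

Definition zc (i : 'I_3) : Z := (Z.of_nat (nat_of_ord i) - 1)%Z.
Definition cz (z : Z) : 'I_3 :=
  match z with
  | Zneg _ => @Ordinal 3 0 isT
  | Z0 => @Ordinal 3 1 isT
  | Zpos _ => @Ordinal 3 2 isT
  end.

Local Open Scope Z_scope.

Definition vx (v : vec)   : Z := zc v.1.1.
Definition vy (v : vec)   : Z := zc v.1.2.
Definition vz (v : vec)   : Z := zc v.2.
Definition mkv (x y z   : Z) : vec := (cz x, cz y, cz z).

Definition dot (v w : vec)   : Z := vx v * vx w + vy v * vy w + vz v * vz w.

Definition nzc (v : vec) : nat :=
  addn (addn (nat_of_bool (~~ Z.eqb (vx v) 0)) (nat_of_bool (~~ Z.eqb (vy v) 0))) (nat_of_bool (~~ Z.eqb (vz v) 0)).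

(* Rotation by 90 degrees CLOCKWISE as seen from outside the cube,    *)
(* looking at the face with outward unit normal m, i.e. rotation by   *)
(* -90 degrees about the axis m:  v |-> v x m + m (m . v).            *)
Definition rot90 (m v : vec) : vec :=
  let d := dot m v in
  mkv (vy v * vz m - vz v * vy m + vx m * d)
      (vz v * vx m - vx v * vz m + vy m * d)
      (vx v * vy m - vy v * vx m + vz m * d).

(* A sticker is a pair (p, n): p the position of the cubelet carrying *)
(* it, n the outward unit normal of the sticker.  k = number of       *)
(* nonzero coordinates of p: k = 3 corner cubelets, k = 2 edges.      *)
Definition valid (k : nat) (s : vec * vec) : bool :=
  [&& nzc s.1 == k, nzc s.2 == 1%nat & Z.eqb (dot s.1 s.2) 1].

Definition stk (k : nat) := {s : vec * vec | valid k s}.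
Definition CS := stk 3%nat.   (* the 24 corner stickers (also the 2x2x2 stickers) *)
Definition ES := stk 2%nat.
Definition St3 := (CS + ES)%type.

Definition pos (k : nat) (s : stk k) : vec := (val s).1.

Definition CP := {p : vec | nzc p == 3%nat}.
Definition EP := {p : vec | nzc p == 2%nat}.

(* the permutation defined by f, if f is injective (always the case below) *)
Definition mkperm (T : finType) (f : T -> T) : {perm T} :=
  match injectiveP f with
  | ReflectT h => perm h
  | ReflectF _ => 1%g
  end.

Definition movefun (k : nat) (m : vec) (s : stk k) : stk k :=
  if Z.eqb (dot (val s).1 m) 1 then insubd s (rot90 m (val s).1, rot90 m (val s).2)
  else s.

Definition nU : vec := mkv 0 1 0.
Definition nD : vec := mkv 0 (-1) 0.
Definition nF : vec := mkv 0 0 1.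
Definition nB : vec := mkv 0 0 (-1).
Definition nL : vec := mkv (-1) 0 0.
Definition nR : vec := mkv 1 0 0.

Definition move3 (m : vec) : {perm St3} :=
  mkperm (fun s : St3 => match s with
                         | inl c => inl (movefun m c)
                         | inr e => inr (movefun m e)
                         end).
Definition move2 (m : vec) : {perm CS} := mkperm (@movefun 3 m).

Definition u3 := move3 nU. Definition d3 := move3 nD. Definition f3 := move3 nF.
Definition b3 := move3 nB. Definition l3 := move3 nL. Definition r3 := move3 nR.
Definition u2 := move2 nU. Definition d2 := move2 nD. Definition f2 := move2 nF.
Definition b2 := move2 nB. Definition l2 := move2 nL. Definition r2 := move2 nR.

Definition G3 : {set {perm St3}} := <<[set u3; d3; f3; b3; l3; r3]>>%g.
Definition G2 : {set {perm CS}} := <<[set u2; d2; f2; b2; l2; r2]>>%g.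

Definition psi (g : {perm St3}) : {perm CS} :=
  mkperm (fun c : CS => match g (inl c) with inl c' => c' | inr _ => c end).

Definition phi (h : {perm CS}) : {perm CP} :=
  mkperm (fun p : CP => odflt p
    [pick q : CP | [exists s : CS, (pos s == val p) && (pos (h s) == val q)]]).

Definition beta (g : {perm St3}) : {perm EP} :=
  mkperm (fun p : EP => odflt p
    [pick q : EP | [exists e : ES, (pos e == val p) &&
        (match g (inr e) with inr e' => pos e' == val q | inl _ => false end)]]).

Definition alpha (g : {perm St3}) : {perm EP} * {perm CP} := (beta g, phi (psi g)).

Definition kerAlpha : {set {perm St3}} := [set g in G3 | alpha g == (1%g, 1%g)].

Definition Lsub : {set {perm St3}} :=
  [set g in G3 | [forall e : ES, g (inr e) == inr e] &&
                 [forall c : CS, match g (inl c) with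
                                 | inl c' => pos c' == pos c
                                 | inr _ => false end]].

Lemma posb_subproof : nzc (mkv 1 1 0) == 2%nat. Proof. by vm_compute. Qed.
Lemma posc_subproof : nzc (mkv 0 1 1) == 2%nat. Proof. by vm_compute. Qed.
Definition pos_b : EP := Sub (mkv 1 1 0) posb_subproof.
Definition pos_c : EP := Sub (mkv 0 1 1) posc_subproof.

Definition sigma (p : {perm CP}) : {perm EP} :=
  if odd_perm p then tperm pos_b pos_c else 1%g.

Definition Sset : {set {perm EP} * {perm CP}} := [set (sigma p, p) | p : {perm CP}].

(* Main.v *)
Require Import Defs.
From Stdlib Require Import ZArith.
From mathcomp Require Import all_boot all_fingroup.
Set Implicit Arguments. Unset Strict Implicit. Unset Printing Implicit Defensive.

Section MySub.
Variables (T : eqType) (P : pred T) (sT : subType P).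
Definition mysub (x : T) : option sT :=
  match P x as b return (P x = b -> option sT) with
  | true => fun H => Some (Sub x H) | false => fun _ => None end (erefl (P x)).
Lemma mysubE x : mysub x = insub x.
Proof.
rewrite /mysub.
have : forall b (E : P x = b), (match b as b0 return (P x = b0 -> option sT) with
  | true => fun H => Some (Sub x H) | false => fun _ => None end E) = insub x.
  by case=> E; [rewrite insubT | rewrite insubF].
by apply.
Qed.
End MySub.

Lemma mem_pmap_mysub (T : eqType) (P : pred T) (sT : subEqType P) (s : seq T) (u : sT) :
  (u \in pmap (@mysub T P sT) s) = (val u \in s).
Proof. by rewrite (eq_pmap (@mysubE T P sT)) mem_pmap_sub. Qed.

Definition ordl : seq 'I_3 := [:: @Ordinal 3 0 isT; @Ordinal 3 1 isT; @Ordinal 3 2 isT].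
Lemma ordl_all (i : 'I_3) : i \in ordl.
Proof. by case: i => [[|[|[|n]]] H]; rewrite ?inE; apply/orP; (try by left; apply/eqP/val_inj); right; rewrite ?inE; apply/orP; (try by left; apply/eqP/val_inj); right; rewrite ?inE; (try by apply/eqP/val_inj). Qed.
Definition vecl : seq vec := [seq (x, z) | x <- [seq (a, b) | a <- ordl, b <- ordl], z <- ordl].
Lemma vecl_all (v : vec) : v \in vecl.
Proof. case: v => [[a b] c]; apply: allpairs_f; [apply: allpairs_f|]; exact: ordl_all. Qed.
Definition vvl : seq (vec * vec) := [seq (p, n) | p <- vecl, n <- vecl].
Lemma vvl_all (v : vec * vec) : v \in vvl.
Proof. case: v => p n; apply: allpairs_f; exact: vecl_all. Qed.
Definition stkl k : seq (stk k) := pmap (@mysub _ _ _) vvl.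
Lemma stkl_all k (s : stk k) : s \in stkl k.
Proof. by rewrite mem_pmap_mysub vvl_all. Qed.
Definition CSl := stkl 3. Definition ESl := stkl 2.
Definition St3l : seq St3 := map inl CSl ++ map inr ESl.
Lemma St3l_all (s : St3) : s \in St3l.
Proof. by case: s => x; rewrite mem_cat; apply/orP; [left|right]; apply: map_f; apply: stkl_all. Qed.
Definition CPl : seq CP := pmap (@mysub _ _ _) vecl.
Lemma CPl_all (p : CP) : p \in CPl. Proof. by rewrite mem_pmap_mysub vecl_all. Qed.

Definition EPl : seq EP := pmap (@mysub _ _ _) vecl.
Lemma EPl_all (p : EP) : p \in EPl. Proof. by rewrite mem_pmap_mysub vecl_all. Qed.

Lemma forall_l (T : eqType) (l : seq T) (P : pred T) :
  (forall x, x \in l) -> all P l -> forall x, P x.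
Proof. by move=> H /allP A x; apply: A. Qed.

Definition mvf k (m : vec) (s : stk k) : stk k :=
  if Z.eqb (dot (val s).1 m) 1 then odflt s (mysub _ (rot90 m (val s).1, rot90 m (val s).2)) else s.
Lemma movefunE k m (s : stk k) : movefun m s = mvf m s.
Proof. by rewrite /movefun /mvf /insubd mysubE. Qed.
Definition nrm (i : nat) : vec := nth nU [:: nU; nD; nF; nB; nL; nR] i.
Definition rmv (m : vec) (s : St3) : St3 := match s with
  | inl c => inl (mvf m c) | inr e => inr (mvf m e) end.
Definition appw (w : seq nat) (x : St3) : St3 := foldl (fun x i => rmv (nrm i) x) x w.
Definition swapxz (v : vec) : vec := (v.2, v.1.2, v.1.1).
Definition taue (e : ES) : ES :=
  if (pos e == mkv 1 1 0) || (pos e == mkv 0 1 1) then odflt e (mysub _ (swapxz (val e).1, swapxz (val e).2)) else e.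

Definition cs0 : CS := exist _ (mkv 1 1 1, mkv 1 0 0) (erefl true).
Definition es0 : ES := exist _ (mkv 1 1 0, mkv 1 0 0) (erefl true).
Definition cp0 : CP := exist _ (mkv 1 1 1) (erefl true).
Definition mkCS (x y z a b c : Z) : CS := odflt cs0 (mysub _ (mkv x y z, mkv a b c)).
Definition mkCP (x y z : Z) : CP := odflt cp0 (mysub _ (mkv x y z)).
Definition c0 : CP := mkCP 1 1 1.

Open Scope Z_scope.
Definition cwn (p n : vec) : vec :=
  mkv ((vx p - vx n + (vy p * vz n - vz p * vy n)) / 2)
      ((vy p - vy n + (vz p * vx n - vx p * vz n)) / 2)
      ((vz p - vz n + (vx p * vy n - vy p * vx n)) / 2).
Close Scope Z_scope.
Definition cwf (c : CS) : CS := odflt c (mysub _ (pos c, cwn (pos c) (val c).2)).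
Definition refc (c : CS) : bool := ~~ Z.eqb (vy (val c).2) 0.
Definition spt (p : CP) : CS := odflt cs0 (mysub _ (val p, mkv (vx (val p)) 0 0)).
Definition ept (p : EP) : ES :=
  odflt es0 (mysub _ (val p, if Z.eqb (vx (val p)) 0 then mkv 0 (vy (val p)) 0 else mkv (vx (val p)) 0 0)).
Definition rtp (T : eqType) (a b x : T) := if x == a then b else if x == b then a else x.
Definition rtprod (T : eqType) (ts : seq (T * T)) (x : T) := foldl (fun x t => rtp t.1 t.2 x) x ts.
Definition odd_raw (T : eqType) (ts : seq (T * T)) := foldr (fun t b => (t.1 != t.2) (+) b) false ts.
Definition fpsiraw (w : seq nat) (s : CS) : CS := match appw w (inl s) with inl c => c | inr _ => s end.

Definition tsU : seq (CS * CS) := [:: ((mkCS (-1) (1) (-1) (-1) (0) (0)), (mkCS (1) (1) (-1) (0) (0) (-1))); ((mkCS (-1) (1) (-1) (-1) (0) (0)), (mkCS (1) (1) (1) (1) (0) (0))); ((mkCS (-1) (1) (-1) (-1) (0) (0)), (mkCS (-1) (1) (1) (0) (0) (1))); ((mkCS (-1) (1) (-1) (0) (0) (-1)), (mkCS (1) (1) (-1) (1) (0) (0))); ((mkCS (-1) (1) (-1) (0) (0) (-1)), (mkCS (1) (1) (1) (0) (0) (1))); ((mkCS (-1) (1) (-1) (0) (0) (-1)), (mkCS (-1) (1) (1) (-1) (0) (0))); ((mkCS (-1) (1) (-1) (0) (1) (0)), (mkCS (1) (1) (-1) (0) (1) (0))); ((mkCS (-1) (1) (-1) (0) (1) (0)),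 (mkCS (1) (1) (1) (0) (1) (0))); ((mkCS (-1) (1) (-1) (0) (1) (0)), (mkCS (-1) (1) (1) (0) (1) (0)))].
Definition psU : seq (CP * CP) := [:: ((mkCP (-1) (1) (-1)), (mkCP (1) (1) (-1))); ((mkCP (-1) (1) (-1)), (mkCP (1) (1) (1))); ((mkCP (-1) (1) (-1)), (mkCP (-1) (1) (1)))].
Definition w_hU : seq nat := [:: 3; 1; 5; 1; 1; 1; 2; 3; 3; 3; 4; 1; 1; 1; 4; 4; 4; 2; 2; 2; 0; 1; 1; 1; 5; 0; 0; 0; 5; 5; 5; 0; 0; 0; 1; 3; 0; 3; 3; 3; 2; 1; 3; 5; 3; 3; 3; 1; 1; 1; 2; 2; 2; 0; 0; 0; 5; 5; 5; 0; 4; 3; 3; 3; 0; 3; 5; 4; 4; 4; 1; 1; 1; 3; 3; 3; 1; 5; 5; 5; 2; 3; 3; 3; 5; 3; 2; 2; 2].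
Definition tsD : seq (CS * CS) := [:: ((mkCS (-1) (-1) (-1) (-1) (0) (0)), (mkCS (-1) (-1) (1) (0) (0) (1))); ((mkCS (-1) (-1) (-1) (-1) (0) (0)), (mkCS (1) (-1) (1) (1) (0) (0))); ((mkCS (-1) (-1) (-1) (-1) (0) (0)), (mkCS (1) (-1) (-1) (0) (0) (-1))); ((mkCS (-1) (-1) (-1) (0) (-1) (0)), (mkCS (-1) (-1) (1) (0) (-1) (0))); ((mkCS (-1) (-1) (-1) (0) (-1) (0)), (mkCS (1) (-1) (1) (0) (-1) (0))); ((mkCS (-1) (-1) (-1) (0) (-1) (0)), (mkCS (1) (-1) (-1) (0) (-1) (0))); ((mkCS (-1) (-1) (-1) (0) (0) (-1)), (mkCS (-1) (-1) (1) (-1) (0) (0))); ((mkCS (-1) (-1) (-1) (0) (0) (-1)), (mkCS (1) (-1) (1) (0) (0) (1))); ((mkCS (-1) (-1) (-1) (0) (0) (-1)), (mkCS (1) (-1) (-1) (1) (0) (0)))].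
Definition psD : seq (CP * CP) := [:: ((mkCP (-1) (-1) (-1)), (mkCP (-1) (-1) (1))); ((mkCP (-1) (-1) (-1)), (mkCP (1) (-1) (1))); ((mkCP (-1) (-1) (-1)), (mkCP (1) (-1) (-1)))].
Definition w_hD : seq nat := [:: 1; 1; 1; 2; 1; 3; 2; 2; 2; 5; 5; 5; 2; 2; 2; 5; 4; 4; 4; 0; 0; 0; 4; 2; 3; 3; 3; 0; 0; 0; 5; 5; 0; 1; 1; 1; 2; 1; 3; 2; 2; 2; 5; 5; 5; 2; 2; 2; 5; 4; 4; 4; 0; 0; 0; 4; 2; 3; 3; 3; 0; 1; 1; 1; 5; 5; 5; 1; 5; 0; 0; 0; 1; 3; 3; 3; 1; 1; 1; 3; 0; 5; 5; 5; 3; 2; 2; 2; 0; 0; 2; 3; 3; 3; 5; 5; 5; 0; 0; 0; 5; 2; 1; 5; 1; 1; 1; 0; 2; 2; 2; 0; 0; 0; 2; 2; 2; 5; 5; 5; 1; 1; 1; 2; 3; 3; 3; 1; 2; 2; 2; 3; 5; 5; 5; 1; 3; 5; 3; 3; 3; 2; 1; 1; 1; 2; 2; 2; 1].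
Definition tsF : seq (CS * CS) := [:: ((mkCS (-1) (-1) (1) (-1) (0) (0)), (mkCS (-1) (1) (1) (0) (1) (0))); ((mkCS (-1) (-1) (1) (-1) (0) (0)), (mkCS (1) (1) (1) (1) (0) (0))); ((mkCS (-1) (-1) (1) (-1) (0) (0)), (mkCS (1) (-1) (1) (0) (-1) (0))); ((mkCS (-1) (-1) (1) (0) (-1) (0)), (mkCS (-1) (1) (1) (-1) (0) (0))); ((mkCS (-1) (-1) (1) (0) (-1) (0)), (mkCS (1) (1) (1) (0) (1) (0))); ((mkCS (-1) (-1) (1) (0) (-1) (0)), (mkCS (1) (-1) (1) (1) (0) (0))); ((mkCS (-1) (-1) (1) (0) (0) (1)), (mkCS (-1) (1) (1) (0) (0) (1))); ((mkCS (-1) (-1) (1) (0) (0) (1)), (mkCS (1) (1) (1) (0) (0) (1))); ((mkCS (-1) (-1) (1) (0) (0) (1)), (mkCS (1) (-1) (1) (0) (0) (1)))].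
Definition psF : seq (CP * CP) := [:: ((mkCP (-1) (-1) (1)), (mkCP (-1) (1) (1))); ((mkCP (-1) (-1) (1)), (mkCP (1) (1) (1))); ((mkCP (-1) (-1) (1)), (mkCP (1) (-1) (1)))].
Definition w_hF : seq nat := [:: 1; 1; 1; 2; 1; 3; 2; 2; 2; 5; 5; 5; 2; 2; 2; 5; 4; 4; 4; 0; 0; 0; 4; 2; 3; 3; 3; 0; 0; 0; 5; 0; 3; 3; 3; 0; 0; 0; 5; 5; 5; 0; 3; 2; 2; 2; 4; 4; 4; 0; 4; 0; 1; 1; 1; 2; 0; 0; 0; 1; 5; 5; 5; 2; 1; 5; 1; 1; 1; 0; 2; 2; 2; 0; 0; 0; 2].
Definition tsB : seq (CS * CS) := [:: ((mkCS (-1) (-1) (-1) (-1) (0) (0)), (mkCS (1) (-1) (-1) (0) (-1) (0))); ((mkCS (-1) (-1) (-1) (-1) (0) (0)), (mkCS (1) (1) (-1) (1) (0) (0))); ((mkCS (-1) (-1) (-1) (-1) (0) (0)), (mkCS (-1) (1) (-1) (0) (1) (0))); ((mkCS (-1) (-1) (-1) (0) (-1) (0)), (mkCS (1) (-1) (-1) (1) (0) (0))); ((mkCS (-1) (-1) (-1) (0) (-1) (0)), (mkCS (1) (1) (-1) (0) (1) (0))); ((mkCS (-1) (-1) (-1) (0) (-1) (0)), (mkCS (-1) (1) (-1) (-1) (0) (0))); ((mkCS (-1) (-1) (-1) (0) (0) (-1)), (mkCS (1) (-1) (-1) (0) (0) (-1))); ((mkCS (-1) (-1) (-1) (0) (0)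 (-1)), (mkCS (1) (1) (-1) (0) (0) (-1))); ((mkCS (-1) (-1) (-1) (0) (0) (-1)), (mkCS (-1) (1) (-1) (0) (0) (-1)))].
Definition psB : seq (CP * CP) := [:: ((mkCP (-1) (-1) (-1)), (mkCP (1) (-1) (-1))); ((mkCP (-1) (-1) (-1)), (mkCP (1) (1) (-1))); ((mkCP (-1) (-1) (-1)), (mkCP (-1) (1) (-1)))].
Definition w_hB : seq nat := [:: 3; 1; 5; 1; 1; 1; 2; 3; 3; 3; 4; 1; 1; 1; 4; 4; 4; 1; 3; 5; 5; 5; 3; 3; 3; 1; 1; 1; 2; 2; 2; 0; 0; 0; 5; 0; 0; 5; 5; 5; 3; 4; 2; 4; 4; 4; 0; 3; 3; 3; 2; 5; 5; 5; 0; 2; 2; 2; 0; 0; 0; 2; 2; 2; 5; 0; 0; 5; 5; 5; 3; 2; 2; 2; 0; 2; 3; 3; 3; 0; 3; 1; 4; 0; 4; 4; 4; 1; 1; 1; 3; 3; 3; 1; 1; 1; 5; 5; 5; 1; 0; 5; 1; 0; 0; 0; 3; 3; 3; 1; 1; 1; 3].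
Definition tsL : seq (CS * CS) := [:: ((mkCS (-1) (-1) (-1) (-1) (0) (0)), (mkCS (-1) (1) (-1) (-1) (0) (0))); ((mkCS (-1) (-1) (-1) (-1) (0) (0)), (mkCS (-1) (1) (1) (-1) (0) (0))); ((mkCS (-1) (-1) (-1) (-1) (0) (0)), (mkCS (-1) (-1) (1) (-1) (0) (0))); ((mkCS (-1) (-1) (-1) (0) (-1) (0)), (mkCS (-1) (1) (-1) (0) (0) (-1))); ((mkCS (-1) (-1) (-1) (0) (-1) (0)), (mkCS (-1) (1) (1) (0) (1) (0))); ((mkCS (-1) (-1) (-1) (0) (-1) (0)), (mkCS (-1) (-1) (1) (0) (0) (1))); ((mkCS (-1) (-1) (-1) (0) (0) (-1)), (mkCS (-1) (1) (-1) (0) (1) (0))); ((mkCS (-1) (-1) (-1) (0) (0) (-1)), (mkCS (-1) (1) (1) (0) (0) (1))); ((mkCS (-1) (-1) (-1) (0) (0) (-1)), (mkCS (-1) (-1) (1) (0) (-1) (0)))].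
Definition psL : seq (CP * CP) := [:: ((mkCP (-1) (-1) (-1)), (mkCP (-1) (1) (-1))); ((mkCP (-1) (-1) (-1)), (mkCP (-1) (1) (1))); ((mkCP (-1) (-1) (-1)), (mkCP (-1) (-1) (1)))].
Definition w_hL : seq nat := [:: 1; 1; 1; 2; 1; 3; 2; 2; 2; 5; 5; 5; 2; 2; 2; 5; 4; 4; 4; 0; 0; 0; 4; 2; 3; 3; 3; 0; 0; 0; 5; 0; 3; 1; 5; 1; 1; 1; 2; 3; 3; 3; 4; 1; 1; 1; 4; 4; 4; 2; 2; 2; 0; 0; 0; 3; 3; 3; 5; 3; 0; 2; 1; 5; 5; 5; 1; 1; 1; 2; 2; 2; 1; 1; 1; 4; 4; 4; 0; 0; 0; 2; 2; 2; 0; 4; 1; 5; 2; 2; 4; 1; 1; 1; 4; 4; 4; 2; 2; 2; 5; 5; 5; 2; 2; 2; 5; 2; 4; 4; 1; 1; 1; 4; 4; 4; 5; 2; 5; 5; 5; 4; 4; 4; 2; 4; 5; 5; 5; 1; 1; 4; 4; 4; 5; 2; 0; 1; 1; 1; 0; 5; 0; 0; 0; 1; 3; 3; 3; 0; 0; 0; 4; 4; 4; 0; 1; 1; 1; 3; 0; 0; 0; 1; 4].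
Definition tsR : seq (CS * CS) := [:: ((mkCS (1) (-1) (-1) (0) (-1) (0)), (mkCS (1) (-1) (1) (0) (0) (1))); ((mkCS (1) (-1) (-1) (0) (-1) (0)), (mkCS (1) (1) (1) (0) (1) (0))); ((mkCS (1) (-1) (-1) (0) (-1) (0)), (mkCS (1) (1) (-1) (0) (0) (-1))); ((mkCS (1) (-1) (-1) (0) (0) (-1)), (mkCS (1) (-1) (1) (0) (-1) (0))); ((mkCS (1) (-1) (-1) (0) (0) (-1)), (mkCS (1) (1) (1) (0) (0) (1))); ((mkCS (1) (-1) (-1) (0) (0) (-1)), (mkCS (1) (1) (-1) (0) (1) (0))); ((mkCS (1) (-1) (-1) (1) (0) (0)), (mkCS (1) (-1) (1) (1) (0) (0))); ((mkCS (1) (-1) (-1) (1) (0) (0)), (mkCS (1) (1) (1) (1) (0) (0))); ((mkCS (1) (-1) (-1) (1) (0) (0)), (mkCS (1) (1) (-1) (1) (0) (0)))].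
Definition psR : seq (CP * CP) := [:: ((mkCP (1) (-1) (-1)), (mkCP (1) (-1) (1))); ((mkCP (1) (-1) (-1)), (mkCP (1) (1) (1))); ((mkCP (1) (-1) (-1)), (mkCP (1) (1) (-1)))].
Definition w_hR : seq nat := [:: 3; 2; 2; 2; 4; 4; 4; 0; 0; 0; 4; 3; 3; 3; 2; 0; 0; 0; 5; 3; 3; 3; 5; 3; 0; 2; 1; 5; 5; 5; 1; 1; 1; 2; 2; 2; 0; 5; 5; 5; 3; 2; 2; 2; 0; 0; 2; 3; 3; 3; 5; 5; 5; 0; 0; 0; 5].
Definition gdata : seq (seq (CS * CS) * seq (CP * CP) * seq nat) := [:: (tsU, psU, w_hU); (tsD, psD, w_hD); (tsF, psF, w_hF); (tsB, psB, w_hB); (tsL, psL, w_hL); (tsR, psR, w_hR)].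
Definition w_q0 : seq nat := [:: 1; 1; 1; 2; 1; 3; 2; 2; 2; 5; 5; 5; 2; 2; 2; 5; 4; 4; 4; 0; 0; 0; 4; 2; 3; 3; 3; 0; 0; 0; 5; 0; 0; 1; 1; 1; 5; 5; 5; 1; 5; 0; 0; 0; 1; 3; 3; 3; 1; 1; 1; 3; 0; 5; 5; 5; 3; 4; 2; 4; 4; 4; 0; 3; 3; 3; 2; 5; 5; 5; 0; 2; 2; 2; 0; 0; 0; 2; 2; 2; 5; 0; 0; 3; 3; 3; 2; 5; 5; 2; 2; 2; 3; 0; 0; 0; 2; 2; 2; 0; 1; 1; 1; 2; 0; 0; 0; 1; 5; 5; 5; 2; 3; 1; 0; 0; 0; 3; 0; 1; 1; 1; 5; 5; 5; 3; 3; 3; 5; 4; 4; 4; 0; 0; 0; 3; 5; 5; 5; 4; 0; 0; 0; 2; 2; 4; 4; 4; 2; 2; 2; 4; 5; 5; 5; 1; 5; 3; 4; 5; 3; 3; 3; 0; 0; 0; 2; 1; 1; 1; 2; 5; 5; 5; 2; 5; 3; 3; 3; 1; 1; 1; 3; 5; 0; 2; 0; 0; 0; 2; 4; 3; 4; 4; 4; 1; 1; 1; 5; 5; 5; 2; 1; 2; 2].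
Definition w_q1 : seq nat := [:: 3; 3; 3; 1; 1; 1; 5; 5; 5; 1; 5; 3; 2; 5; 1; 5; 5; 5; 1; 1; 1; 2; 2; 2; 3; 0; 0; 0; 3; 3; 3; 2; 5; 5; 2; 2; 2; 3; 0; 0; 0; 3; 3; 3; 0; 0; 0; 5; 5; 5; 3; 2; 2; 2; 0; 2; 3; 3; 3; 0; 4; 4; 4; 0; 0; 0; 5; 0; 0; 0; 5; 5; 5; 4; 2; 5; 5; 5; 2; 5; 5; 2; 4; 1; 1; 1; 4; 4; 4; 2; 2; 2; 5; 5; 5; 2; 2; 2; 5; 2; 4; 0; 0; 0; 1; 5; 5; 5; 1; 1; 1; 0; 2; 4; 4; 4; 2; 4; 4; 4; 3; 5; 5; 5; 4; 0; 0; 0; 5; 2; 2; 2; 5; 3; 4; 5; 5; 5; 2; 2; 2; 4; 4; 4; 3; 3; 3; 1; 3; 3; 3; 1; 1; 1; 3; 2; 5; 5; 5; 2; 2; 2; 5; 2; 0; 2; 0; 0; 0; 5; 5; 5; 2; 2; 2; 5; 0; 2; 2; 2; 0; 0; 0; 2; 0; 0; 0; 5; 5; 5; 0; 1; 1; 1; 2; 4; 4; 4; 0; 4; 1; 2; 2].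
Definition w_q2 : seq nat := [:: 3; 1; 5; 1; 1; 1; 2; 3; 3; 3; 4; 1; 1; 1; 4; 4; 4; 2; 2; 2; 3; 3; 3; 1; 1; 1; 5; 5; 5; 1; 5; 3; 2; 5; 1; 5; 5; 5; 1; 1; 1; 2; 2; 2; 3; 1; 5; 3; 5; 5; 5; 4; 0; 0; 0; 4; 4; 4; 1; 1; 1; 3; 3; 2; 2; 2; 0; 1; 1; 1; 2; 0; 0; 0; 1; 5; 5; 5; 2; 3; 1; 1; 1; 2; 3; 3; 3; 1; 2; 2; 2; 3; 5; 5; 5; 1; 0; 3; 3; 3; 5; 5; 5; 3; 2; 2; 2; 0; 2; 0; 0; 0; 4; 4; 4; 0; 0; 0; 3; 5; 5; 5; 4; 0; 0; 0; 2; 5; 4; 4; 4; 1; 1; 1; 5; 5; 5; 4; 3; 5; 2; 4; 4; 4; 2; 1; 4; 3; 3; 3; 1; 1; 3; 5; 3; 3; 3; 2; 2; 2; 5; 0; 2; 2; 2; 0; 0; 0; 4; 4; 4; 0; 0; 0; 4; 2; 3; 3; 3; 5; 3; 0; 0; 0; 2; 5; 2; 2; 2; 3; 0; 0; 0; 4; 3; 3; 3; 0; 0; 0; 2; 2; 2; 0; 0].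
Definition w_q3 : seq nat := [:: 2; 1; 3; 5; 5; 5; 3; 3; 3; 1; 1; 1; 2; 2; 2; 0; 0; 0; 5; 0; 0; 5; 5; 5; 3; 2; 2; 2; 0; 0; 2; 3; 3; 3; 5; 5; 5; 0; 0; 0; 3; 1; 5; 3; 5; 5; 5; 4; 0; 0; 0; 4; 4; 4; 1; 1; 1; 3; 3; 3; 1; 0; 0; 0; 3; 3; 3; 1; 3; 0; 1; 1; 1; 5; 5; 5; 1; 1; 1; 5; 5; 1; 3; 5; 5; 5; 3; 3; 3; 2; 1; 2; 2; 2; 1; 1; 1; 5; 5; 5; 4; 2; 2; 2; 4; 4; 4; 5; 0; 5; 5; 5; 1; 0; 0; 0; 5; 5; 5; 0; 1; 1; 1; 2; 2; 0; 0; 0; 2; 1; 1; 1; 0; 4; 4; 4; 1; 2; 2; 2; 3; 1; 2; 3; 3; 3; 4; 4; 4; 2; 2; 2; 3; 3; 3; 5; 2; 0; 0; 0; 3; 0; 0; 0; 5; 5; 5; 2; 1; 1; 1; 2; 5; 2; 2; 2; 0; 5; 2; 5; 5; 5; 2; 2; 2; 0; 0; 0; 5; 5; 5; 3; 3; 3; 5; 3; 0; 0; 0].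
Definition w_q4 : seq nat := [:: 1; 1; 1; 2; 1; 3; 2; 2; 2; 5; 5; 5; 2; 2; 2; 5; 4; 4; 4; 0; 0; 0; 4; 2; 3; 3; 3; 0; 0; 0; 5; 5; 0; 1; 1; 1; 2; 1; 3; 2; 2; 2; 5; 5; 5; 2; 2; 2; 5; 4; 4; 4; 0; 0; 0; 4; 2; 3; 3; 1; 1; 1; 5; 5; 5; 1; 5; 3; 2; 5; 1; 5; 5; 5; 1; 1; 1; 2; 2; 2; 0; 1; 1; 1; 2; 2; 2; 0; 0; 0; 2; 1; 0; 0; 0; 5; 5; 5; 0; 5; 4; 3; 3; 3; 0; 3; 5; 4; 4; 4; 1; 1; 1; 3; 3; 3; 1; 5; 5; 5; 3; 2; 2; 2; 1; 5; 1; 1; 1; 3; 3; 3; 2; 4; 1; 1; 1; 4; 4; 4; 3; 3; 3; 5; 1; 0; 0; 0; 3; 3; 3; 0; 1; 1; 1; 3; 3; 0; 3; 3; 3; 2; 5; 5; 5; 2; 2; 2; 1; 0; 0; 0; 5; 5; 5; 0; 1; 1; 1; 2; 2; 0; 0; 0; 2; 1; 1; 1; 0; 4; 4; 4; 1; 2; 2; 2; 3; 1; 2; 3; 3; 3; 4; 4; 4; 2; 2; 2; 3; 3; 3; 5; 2; 0; 0; 0; 3; 0; 0; 0; 5; 5; 5; 2; 1; 1; 1; 2; 5; 0; 2; 0; 0; 0; 5; 5; 5; 2; 2; 2; 5; 5; 5].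
Definition w_q5 : seq nat := [:: 1; 1; 1; 2; 1; 3; 2; 2; 2; 5; 5; 5; 2; 2; 2; 5; 4; 4; 4; 0; 0; 0; 4; 2; 3; 3; 3; 0; 0; 0; 5; 0; 3; 1; 5; 1; 1; 1; 2; 3; 3; 3; 4; 1; 1; 1; 4; 4; 4; 1; 3; 5; 5; 5; 3; 3; 3; 1; 1; 1; 2; 2; 2; 0; 0; 0; 5; 0; 0; 5; 5; 5; 3; 4; 2; 4; 4; 4; 0; 3; 3; 3; 2; 5; 5; 5; 0; 2; 2; 2; 0; 0; 0; 2; 2; 2; 5; 0; 0; 0; 4; 3; 3; 3; 0; 3; 5; 4; 4; 4; 1; 1; 1; 3; 3; 3; 1; 5; 5; 5; 2; 2; 2; 0; 0; 0; 5; 0; 1; 1; 1; 2; 2; 2; 1; 2; 3; 3; 3; 5; 1; 0; 0; 0; 3; 3; 3; 0; 1; 1; 1; 3; 3; 0; 3; 3; 3; 2; 5; 5; 5; 2; 2; 2; 1; 0; 0; 0; 5; 5; 5; 0; 1; 1; 1; 2; 2; 0; 0; 0; 2; 1; 1; 1; 0; 4; 4; 4; 1; 2; 2; 2; 3; 1; 2; 3; 3; 3; 4; 4; 4; 2; 2; 2; 3; 3; 3; 5; 2; 0; 0; 0; 3; 0; 0; 0; 5; 5; 5; 2; 1; 1; 1; 2; 5; 2; 2; 2; 0; 2; 2; 2; 0; 0; 0; 4; 4; 4; 0; 0; 0; 4; 2].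
Definition w_q6 : seq nat := [:: 1; 1; 1; 2; 1; 3; 2; 2; 2; 5; 5; 5; 2; 2; 2; 5; 4; 4; 4; 0; 0; 0; 4; 2; 3; 3; 3; 0; 0; 0; 5; 0; 1; 3; 0; 0; 0; 3; 3; 3; 1; 1; 1; 0; 5; 0; 5; 5; 5; 1; 1; 1; 2; 2; 2; 0; 0; 0; 2; 1; 0; 0; 0; 5; 5; 5; 0; 5; 4; 4; 4; 1; 1; 1; 2; 2; 2; 1; 4; 5; 5; 5; 3; 3; 3; 1; 3; 5; 5; 2; 4; 1; 1; 1; 4; 4; 4; 2; 2; 2; 5; 5; 5; 2; 2; 2; 5; 2; 4; 0; 0; 0; 1; 5; 5; 5; 1; 1; 1; 0; 2; 4; 4; 4; 5; 3; 4; 5; 5; 5; 2; 2; 2; 4; 4; 4; 3; 3; 3; 1; 3; 3; 3; 1; 1; 1; 3; 2; 5; 5; 5; 2; 2; 2; 5].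
Definition qlist : seq (CP * seq nat) := [:: ((mkCP (-1) (-1) (-1)), w_q0); ((mkCP (-1) (-1) (1)), w_q1); ((mkCP (-1) (1) (-1)), w_q2); ((mkCP (-1) (1) (1)), w_q3); ((mkCP (1) (-1) (-1)), w_q4); ((mkCP (1) (-1) (1)), w_q5); ((mkCP (1) (1) (-1)), w_q6)].

Definition checkgen (i : nat) (d : seq (CS * CS) * seq (CP * CP) * seq nat) :=
  let: (ts, ps, w) := d in
  [&& all (fun c => all (fun c' => (pos (mvf (nrm i) c) == pos (mvf (nrm i) c')) == (pos c == pos c')) CSl) CSl,
      all (fun c => mvf (nrm i) (cwf c) == cwf (mvf (nrm i) c)) CSl,
      all (fun c => mvf (nrm i) c == rtprod ts c) CSl,
      odd_raw ts,
      all (fun p => val (rtprod ps p) == pos (mvf (nrm i) (spt p))) CPl,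
      odd_raw ps,
      all (fun c => mvf (nrm i) (mvf (nrm i) (mvf (nrm i) (mvf (nrm i) c))) == c) CSl,
      all (fun c => mvf (nrm i) (mvf (nrm i) (mvf (nrm i) (mvf (nrm i) c))) == c) ESl,
      all (fun j => j < 6)%N w,
      all (fun e => appw w (inr e) == inr (taue e)) ESl &
      all (fun c => fpsiraw w c == mvf (nrm i) c) CSl].
Lemma checkgen_ok : all (fun i => checkgen i (nth (tsU, psU, w_hU) gdata i)) (iota 0 6).
Proof. vm_compute. reflexivity. Qed.

Definition checkq (d : CP * seq nat) :=
  let: (ci, w) := d in
  [&& ci != c0, all (fun j => j < 6)%N w,
      all (fun e => appw w (inr e) == inr (taue e)) ESl,
      all (fun c => refc c ==> refc (fpsiraw w c)) CSl &
      all (fun p => val (rtp c0 ci p) == pos (fpsiraw w (spt p))) CPl].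
Lemma checkq_ok : all checkq qlist && all (fun x => (x == c0) || has (fun t => t.1 == x) qlist) CPl.
Proof. vm_compute. reflexivity. Qed.

Lemma m1 : all (fun p => pos (spt p) == val p) CPl. Proof. vm_compute. reflexivity. Qed.
Lemma m2 : all (fun p => pos (ept p) == val p) EPl. Proof. vm_compute. reflexivity. Qed.
Lemma m3 : all (fun c => refc c || refc (cwf c) || refc (cwf (cwf c))) CSl. Proof. vm_compute. reflexivity. Qed.
Lemma m4 : all (fun c => cwf (cwf (cwf c)) == c) CSl. Proof. vm_compute. reflexivity. Qed.
Lemma m5 : all (fun c => all (fun c' => [==> refc c, refc c' , pos c == pos c' => c == c']) CSl) CSl. Proof. vm_compute. reflexivity. Qed.
Lemma m6 : all (fun e => taue (taue e) == e) ESl. Proof. vm_compute. reflexivity. Qed.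
Lemma m7 : all (fun e => all (fun e' => (pos e == pos e') ==> (pos (taue e) == pos (taue e'))) ESl) ESl. Proof. vm_compute. reflexivity. Qed.
Lemma m8 : all (fun p => val (rtp pos_b pos_c p) == pos (taue (ept p))) EPl. Proof. vm_compute. reflexivity. Qed.
Lemma m9 : c0 == cp0. Proof. vm_compute. reflexivity. Qed.


Lemma mkpermE (T : finType) (f : T -> T) : injective f -> mkperm f =1 f.
Proof. by move=> inj x; rewrite /mkperm; case: injectiveP => [h|[]//]; rewrite permE. Qed.

Lemma mkperm_ext (T : finType) (f g : T -> T) : f =1 g -> mkperm f = mkperm g.
Proof.
move=> E; rewrite /mkperm; case: injectiveP => Hf; case: injectiveP => Hg //.
- by apply/permP => x; rewrite !permE.
- by case: Hg; apply: eq_inj Hf E.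
- by case: Hf; apply: eq_inj Hg (fsym E).
Qed.

Lemma mkperm_perm (T : finType) (s : {perm T}) : mkperm (fun x => s x) = s.
Proof. by apply/permP => x; rewrite mkpermE //; apply: perm_inj. Qed.

Lemma rtpE (T : finType) (a b x : T) : tperm a b x = rtp a b x.
Proof. by rewrite /rtp; case: tpermP => [->|->|/eqP/negbTE-> /eqP/negbTE->]; rewrite ?eqxx //; case: eqP. Qed.

Fixpoint tprod (T : finType) (ts : seq (T * T)) : {perm T} :=
  if ts is t :: ts' then tperm t.1 t.2 * tprod ts' else 1.
Lemma tprodE (T : finType) (ts : seq (T * T)) x : tprod ts x = rtprod ts x.
Proof. by elim: ts x => [|t ts IH] x /=; rewrite ?perm1 // permM IH rtpE. Qed.
Lemma odd_tprod (T : finType) (ts : seq (T * T)) : odd_perm (tprod ts) = odd_raw ts.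
Proof. by elim: ts => [|t ts IH] /=; rewrite ?odd_perm1 // odd_permM odd_tperm IH. Qed.

Lemma gen_facts i : (i < 6)%N -> checkgen i (nth (tsU, psU, w_hU) gdata i).
Proof. by move=> Hi; move/allP: checkgen_ok; apply; rewrite mem_iota. Qed.

Lemma sptE p : pos (spt p) = val p.
Proof. by move/allP: m1 => H; apply/eqP/H/CPl_all. Qed.
Lemma eptE p : pos (ept p) = val p.
Proof. by move/allP: m2 => H; apply/eqP/H/EPl_all. Qed.
Lemma ref3 c : [|| refc c, refc (cwf c) | refc (cwf (cwf c))].
Proof. by move/allP: m3 => H; rewrite orbA; apply/H/stkl_all. Qed.
Lemma cw3 c : cwf (cwf (cwf c)) = c.
Proof. by move/allP: m4 => H; apply/eqP/H/stkl_all. Qed.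
Lemma refU c c' : refc c -> refc c' -> pos c = pos c' -> c = c'.
Proof.
move/allP: m5 => H r r' E; move: (H c (stkl_all _)) => /allP /(_ c' (stkl_all _)).
by rewrite r r' E eqxx => /eqP.
Qed.
Lemma tauK e : taue (taue e) = e.
Proof. by move/allP: m6 => H; apply/eqP/H/stkl_all. Qed.
Lemma tau_cpt e e' : pos e = pos e' -> pos (taue e) = pos (taue e').
Proof. move/allP: m7 => H E; move/allP: (H e (stkl_all _)) => /(_ e' (stkl_all _)). by rewrite E eqxx => /eqP. Qed.
Lemma tauP p : val (tperm pos_b pos_c p) = pos (taue (ept p)).
Proof. by move/allP: m8 => H; rewrite rtpE; apply/eqP/H/EPl_all. Qed.

Definition gen3 i := move3 (nrm i).
Definition gen2 i := move2 (nrm i).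
Definition gd i := nth (tsU, psU, w_hU) gdata i.

Lemma gen_split i ts ps w : (i < 6)%N -> gd i = (ts, ps, w) ->
  [/\ forall c c' : CS, (pos (mvf (nrm i) c) == pos (mvf (nrm i) c')) = (pos c == pos c'),
      forall c, mvf (nrm i) (cwf c) = cwf (mvf (nrm i) c),
      forall c, mvf (nrm i) c = rtprod ts c,
      odd_raw ts & forall p, val (rtprod ps p) = pos (mvf (nrm i) (spt p))] /\
  [/\ odd_raw ps,
      forall c : CS, mvf (nrm i) (mvf (nrm i) (mvf (nrm i) (mvf (nrm i) c))) = c,
      forall c : ES, mvf (nrm i) (mvf (nrm i) (mvf (nrm i) (mvf (nrm i) c))) = c,
      all (fun j => j < 6)%N w &
      (forall e, appw w (inr e) = inr (taue e)) /\ (forall c, fpsiraw w c = mvf (nrm i) c)].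
Proof.
move=> Hi Hd; have := gen_facts Hi; rewrite -/(gd i) Hd /checkgen.
move=> /andP [/allP A1 /andP [/allP A2 /andP [/allP A3 /andP [A4 /andP [/allP A5 /andP [A6 /andP [/allP A7 /andP [/allP A8 /andP [A9 /andP [/allP A10 /allP A11]]]]]]]]]].
split; split.
- by move=> c c'; move/allP: (A1 c (stkl_all _)) => /(_ c' (stkl_all _)) /eqP.
- by move=> c; apply/eqP/A2/stkl_all.
- by move=> c; apply/eqP/A3/stkl_all.
- by [].
- by move=> p; apply/eqP/A5/CPl_all.
- by [].
- by move=> c; apply/eqP/A7/stkl_all.
- by move=> c; apply/eqP/A8/stkl_all.
- by [].
- by split=> x; apply/eqP; [apply/A10 | apply/A11]; apply/stkl_all.
Qed.

Lemma mvf4 i k (s : stk k) : (i < 6)%N -> (k == 2) || (k == 3) ->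
  mvf (nrm i) (mvf (nrm i) (mvf (nrm i) (mvf (nrm i) s))) = s.
Proof.
move=> Hi Hk; case E: (gd i) => [[ts ps] w]; have [_ [_ H3 H2 _ _]] := gen_split Hi E.
by case/orP: Hk => /eqP Ek; subst k; [apply: H2 | apply: H3].
Qed.

Definition rmv3 i := rmv (nrm i).
Lemma rmv_inj i : (i < 6)%N -> injective (rmv (nrm i)).
Proof.
move=> Hi; apply: (can_inj (g := fun x => rmv (nrm i) (rmv (nrm i) (rmv (nrm i) x)))).
by case=> x /=; rewrite mvf4.
Qed.
Lemma mvf_inj i k : (i < 6)%N -> (k == 2) || (k == 3) -> injective (@mvf k (nrm i)).
Proof.
move=> Hi Hk; apply: (can_inj (g := fun x => mvf (nrm i) (mvf (nrm i) (mvf (nrm i) x)))).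
by move=> x; rewrite mvf4.
Qed.
Lemma gen3E i x : (i < 6)%N -> gen3 i x = rmv (nrm i) x.
Proof.
move=> Hi; rewrite /gen3 /move3 -(mkpermE (rmv_inj Hi)); congr (fun_of_perm _ x).
by apply: mkperm_ext; case=> y /=; rewrite movefunE.
Qed.
Lemma gen2E i x : (i < 6)%N -> gen2 i x = mvf (nrm i) x.
Proof.
move=> Hi; rewrite /gen2 /move2 -(mkpermE (mvf_inj Hi (isT : (3 == 2) || (3 == 3)))); congr (fun_of_perm _ x).
by apply: mkperm_ext => y; rewrite movefunE.
Qed.

Lemma gen3_G3 i : (i < 6)%N -> gen3 i \in G3.
Proof.
move=> Hi; apply: mem_gen; rewrite /gen3.
by case: i Hi => [|[|[|[|[|[|]]]]]] // _; rewrite !inE eqxx ?orbT.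
Qed.
Lemma gen2_G2 i : (i < 6)%N -> gen2 i \in G2.
Proof.
move=> Hi; apply: mem_gen; rewrite /gen2.
by case: i Hi => [|[|[|[|[|[|]]]]]] // _; rewrite !inE eqxx ?orbT.
Qed.
Lemma G3_gens x : x \in [set u3; d3; f3; b3; l3; r3] -> exists2 i, (i < 6)%N & x = gen3 i.
Proof.
rewrite !inE => /orP [/orP [/orP [/orP [/orP [/eqP->|/eqP->]|/eqP->]|/eqP->]|/eqP->]|/eqP->].
- by exists 0. - by exists 1. - by exists 2. - by exists 3. - by exists 4. - by exists 5.
Qed.
Lemma G2_gens x : x \in [set u2; d2; f2; b2; l2; r2] -> exists2 i, (i < 6)%N & x = gen2 i.
Proof.
rewrite !inE => /orP [/orP [/orP [/orP [/orP [/eqP->|/eqP->]|/eqP->]|/eqP->]|/eqP->]|/eqP->].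
- by exists 0. - by exists 1. - by exists 2. - by exists 3. - by exists 4. - by exists 5.
Qed.

Local Open Scope group_scope.
Definition prodw (w : seq nat) : {perm St3} := foldl (fun g i => g * gen3 i) 1 w.
Lemma prodwE w x : all (fun j => j < 6)%N w -> prodw w x = appw w x.
Proof.
rewrite /prodw; rewrite -{2}(perm1 x); move: 1 x.
elim: w => [|i w IH] g x //= /andP [Hi Hw].
by rewrite IH // permM gen3E.
Qed.
Lemma prodw_G3 w : all (fun j => j < 6)%N w -> prodw w \in G3.
Proof.
rewrite /prodw; have : (1 : {perm St3}) \in G3 by apply: group1.
move: 1; elim: w => [|i w IH] g Hg //= /andP [Hi Hw].
by apply: IH => //; rewrite groupM // gen3_G3.
Qed.

Definition fpsi (g : {perm St3}) (c : CS) : CS := match g (inl c) with inl c' => c' | inr _ => c end.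
Definition blk (g : {perm St3}) := [forall c, if g (inl c) is inl _ then true else false].
Lemma blkE g : blk g -> forall c, g (inl c) = inl (fpsi g c).
Proof. by move=> /forallP H c; move: (H c); rewrite /fpsi; case: (g (inl c)). Qed.
Lemma fpsi_inj g : blk g -> injective (fpsi g).
Proof. by move=> Hb c1 c2 E; apply: (@inl_inj CS ES); apply: (@perm_inj _ g); rewrite !blkE // E. Qed.
Lemma psiE g : blk g -> psi g =1 fpsi g.
Proof. by move=> Hb; apply: (mkpermE (fpsi_inj Hb)). Qed.
Lemma blk1 : blk 1.
Proof. by apply/forallP => c; rewrite perm1. Qed.
Lemma fpsi1 c : fpsi 1 c = c.
Proof. by rewrite /fpsi perm1. Qed.
Lemma blkM g h : blk g -> blk h -> blk (g * h).
Proof. by move=> Hg Hh; apply/forallP => c; rewrite permM (blkE Hg) (blkE Hh). Qed.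
Lemma fpsiM g h c : blk g -> blk h -> fpsi (g * h) c = fpsi h (fpsi g c).
Proof. by move=> Hg Hh; rewrite {1}/fpsi permM (blkE Hg) (blkE Hh). Qed.
Lemma psi1 : psi 1 = 1.
Proof. by apply/permP => c; rewrite psiE ?blk1 // fpsi1 perm1. Qed.
Lemma psiM g h : blk g -> blk h -> psi (g * h) = psi g * psi h.
Proof. by move=> Hg Hh; apply/permP => c; rewrite permM !psiE ?blkM // fpsiM. Qed.

Definition posF k (f : stk k -> stk k) (p : {p : vec | nzc p == k}) : {p : vec | nzc p == k} :=
  odflt p [pick q | [exists s, (pos s == val p) && (pos (f s) == val q)]].
Lemma posFE k (f : stk k -> stk k) (p : {p : vec | nzc p == k}) s :
  (forall s s', pos s = pos s' -> pos (f s) = pos (f s')) -> pos s = val p ->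
  val (posF f p) = pos (f s).
Proof.
move=> Hc Hs; rewrite /posF; case: pickP => [q /existsP [s' /andP [/eqP H1 /eqP H2]] | H].
  by rewrite -H2; apply: Hc; rewrite H1 Hs.
have Hq : nzc (pos (f s)) == k by case/and3P: (valP (f s)).
move: (H (exist _ (pos (f s)) Hq)) => /= /negbT /existsPn /(_ s).
by rewrite Hs !eqxx.
Qed.
Definition cpt (h : {perm CS}) := [forall c, [forall c', (pos (h c) == pos (h c')) == (pos c == pos c')]].
Lemma cptP h : cpt h -> forall c c', (pos (h c) == pos (h c')) = (pos c == pos c').
Proof. by move=> /forallP H c c'; move/forallP: (H c) => /(_ c') /eqP. Qed.
Lemma cpt_w h : cpt h -> forall s s', pos s = pos s' -> pos (h s) = pos (h s').
Proof. by move=> H s s' E; apply/eqP; rewrite (cptP H) E. Qed.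
Lemma phiE h p s : cpt h -> pos s = val p -> val (phi h p) = pos (h s).
Proof.
move=> Hc Hs; rewrite /phi mkpermE.
  by apply: (posFE (f := fun x => h x)) => //; apply: cpt_w.
move=> p1 p2 E; apply: val_inj.
have E1 := posFE (f := fun x => h x) (cpt_w Hc) (sptE p1).
have E2 := posFE (f := fun x => h x) (cpt_w Hc) (sptE p2).
rewrite -(sptE p1) -(sptE p2); apply/eqP; rewrite -(cptP Hc).
by rewrite -E1 -E2 /posF; apply/eqP; congr val; exact: E.
Qed.
Lemma cpt1 : cpt 1.
Proof. by apply/forallP => c; apply/forallP => c'; rewrite !perm1. Qed.
Lemma cptM h1 h2 : cpt h1 -> cpt h2 -> cpt (h1 * h2).
Proof. by move=> H1 H2; apply/forallP => c; apply/forallP => c'; rewrite !permM (cptP H2) (cptP H1). Qed.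
Lemma cposP (c : CS) : nzc (pos c) == 3. Proof. by case/and3P: (valP c). Qed.
Definition cpos (c : CS) : CP := exist _ (pos c) (cposP c).
Lemma phi1 : phi 1 = 1.
Proof. by apply/permP => p; apply: val_inj; rewrite (phiE cpt1 (sptE p)) perm1 sptE perm1. Qed.
Lemma phiM h1 h2 : cpt h1 -> cpt h2 -> phi (h1 * h2) = phi h1 * phi h2.
Proof.
move=> H1 H2; apply/permP => p; apply: val_inj.
rewrite (phiE (cptM H1 H2) (sptE p)) !permM.
by rewrite (phiE H2 (esym (phiE H1 (sptE p)))).
Qed.
Lemma phi_fix h c : cpt h -> phi h = 1 -> pos (h c) = pos c.
Proof. by move=> Hc E; rewrite -(phiE (p := cpos c) Hc (erefl _)) E perm1. Qed.


Definition cwc (h : {perm CS}) := [forall c, h (cwf c) == cwf (h c)].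
Definition Wset : {set {perm St3}} :=
  [set g | [&& blk g, cpt (psi g), cwc (psi g), odd_perm (psi g) == odd_perm (phi (psi g)) & psi g \in G2]].
Lemma W_group : group_set Wset.
Proof.
apply/group_setP; split.
  rewrite inE blk1 psi1 cpt1 phi1 group1 !odd_perm1 /= andbT; by apply/forallP => c; rewrite !perm1.
move=> g h; rewrite !inE => /and5P [Bg Cg Wg Og Gg] /and5P [Bh Ch Wh Oh Gh].
rewrite blkM // psiM // cptM // phiM // groupM // !odd_permM (eqP Og) (eqP Oh) /= eqxx !andbT.
apply/forallP => c; rewrite !permM.
by rewrite (eqP (forallP Wg c)) (eqP (forallP Wh _)).
Qed.
Canonical Wgroup := Group W_group.

Lemma blk_gen i : (i < 6)%N -> blk (gen3 i).
Proof. by move=> Hi; apply/forallP => c; rewrite gen3E. Qed.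
Lemma psi_gen i : (i < 6)%N -> psi (gen3 i) = gen2 i.
Proof. by move=> Hi; apply/permP => c; rewrite psiE ?blk_gen // /fpsi gen3E // gen2E. Qed.
Lemma gen_W i : (i < 6)%N -> gen3 i \in Wset.
Proof.
move=> Hi; case E: (gd i) => [[ts ps] w]; have [[A1 A2 A3 A4 A5] [A6 _ _ _ _]] := gen_split Hi E.
have Cg : cpt (gen2 i).
  by apply/forallP => c; apply/forallP => c'; rewrite !gen2E // A1.
have T2 : gen2 i = tprod ts by apply/permP => c; rewrite gen2E // tprodE A3.
have T3 : phi (gen2 i) = tprod ps.
  by apply/permP => p; apply: val_inj; rewrite tprodE A5 (phiE Cg (sptE p)) gen2E.
rewrite inE blk_gen // psi_gen // gen2_G2 // Cg andbT /=.
rewrite {2}T2 T3 !odd_tprod A4 A6 eqxx andbT.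
by apply/forallP => c; rewrite !gen2E // A2.
Qed.
Lemma G3W : G3 \subset Wset.
Proof. by rewrite /G3 gen_subG; apply/subsetP => x /G3_gens [i Hi ->]; exact: gen_W. Qed.
Lemma G3facts g : g \in G3 ->
  [/\ blk g, cpt (psi g), cwc (psi g), odd_perm (psi g) = odd_perm (phi (psi g)) & psi g \in G2].
Proof. by move/(subsetP G3W); rewrite inE => /and5P [? ? ? /eqP ? ?]. Qed.

Definition Pset : {set {perm St3}} :=
  [set g | blk g && [forall e, g (inr e) == inr (if odd_perm (psi g) then taue e else e)]].
Lemma P_group : group_set Pset.
Proof.
apply/group_setP; split.
  by rewrite inE blk1 psi1 odd_perm1; apply/forallP => e; rewrite perm1.
move=> g h; rewrite !inE => /andP [Bg /forallP Eg] /andP [Bh /forallP Eh].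
rewrite blkM //=; apply/forallP => e; rewrite permM (eqP (Eg e)) (eqP (Eh _)) psiM // odd_permM.
by case: (odd_perm (psi g)); case: (odd_perm (psi h)); rewrite //= tauK.
Qed.
Canonical Pgroup := Group P_group.
Definition Oset : {set {perm St3}} := [set g | blk g && [forall c, refc c ==> refc (fpsi g c)]].
Lemma O_group : group_set Oset.
Proof.
apply/group_setP; split.
  by rewrite inE blk1; apply/forallP => c; rewrite fpsi1 implybb.
move=> g h; rewrite !inE => /andP [Bg /forallP Eg] /andP [Bh /forallP Eh].
rewrite blkM //=; apply/forallP => c; rewrite fpsiM //; apply/implyP => r.
by move/implyP: (Eh (fpsi g c)); apply; move/implyP: (Eg c); apply.
Qed.
Canonical Ogroup := Group O_group.
Definition Hg := (G3 :&: Pset)%G.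
Definition Qg := (G3 :&: Pset :&: Oset)%G.

Lemma LA g : g \in G3 -> g \in Pset -> phi (psi g) = 1 -> g \in Lsub.
Proof.
move=> G Pg E; have [Bg Cg _ Og _] := G3facts G.
move: Pg; rewrite inE => /andP [_ /forallP Eg].
rewrite inE G /=; apply/andP; split.
  by apply/forallP => e; move: (Eg e); rewrite Og E odd_perm1.
by apply/forallP => c; rewrite (blkE Bg) -(psiE Bg) (phi_fix c Cg E).
Qed.

Lemma LB g : g \in G3 -> g \in Oset -> (forall e, g (inr e) = inr e) -> phi (psi g) = 1 -> g = 1.
Proof.
move=> G Og He E; have [Bg Cg Wg _ _] := G3facts G.
move: Og; rewrite inE => /andP [_ /forallP Rg].
have Pf : forall c, pos (psi g c) = pos c := fun c => phi_fix c Cg E.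
have Rf : forall r, refc r -> psi g r = r.
  move=> r Hr; apply: refU => //; rewrite psiE //; exact: (implyP (Rg r) Hr).
have Cw : forall c, psi g (cwf c) = cwf (psi g c) := fun c => eqP (forallP Wg c).
have Fix : forall c, psi g c = c.
  move=> c; case/or3P: (ref3 c) => H.
  - exact: Rf.
  - by rewrite -{1}(cw3 c) (Cw (cwf (cwf c))) (Cw (cwf c)) (Rf _ H) cw3.
  - by rewrite -{1}(cw3 c) (Cw (cwf (cwf c))) (Rf _ H) cw3.
apply/permP => [[c|e]]; rewrite perm1; last exact: He.
by rewrite (blkE Bg) -(psiE Bg) Fix.
Qed.

Lemma Lfacts g : g \in Lsub -> [/\ g \in G3, forall e, g (inr e) = inr e & phi (psi g) = 1].
Proof.
rewrite inE => /andP [G /andP [/forallP He /forallP Hc]].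
have [Bg Cg _ _ _] := G3facts G.
split => //; first by move=> e; apply/eqP.
apply/permP => p; apply: val_inj; rewrite perm1 (phiE Cg (sptE p)) psiE // /fpsi.
by move: (Hc (spt p)); case: (g (inl (spt p))) => // c' /eqP ->; exact: sptE.
Qed.

Lemma L_sub_H : Lsub \subset Hg.
Proof.
apply/subsetP => g Lg; have [G He E] := Lfacts Lg; have [Bg _ _ Og _] := G3facts G.
rewrite in_setI G /= inE Bg /= Og E odd_perm1; apply/forallP => e; by rewrite He.
Qed.

Lemma L_group : group_set Lsub.
Proof.
apply/group_setP; split.
  rewrite inE group1 /=; apply/andP; split; apply/forallP => x; by rewrite perm1.
move=> g h Lg Lh; have [Gg Eg Pg] := Lfacts Lg; have [Gh Eh Ph] := Lfacts Lh.
have [Bg Cg _ _ _] := G3facts Gg; have [Bh Ch _ _ _] := G3facts Gh.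
rewrite inE groupM //=; apply/andP; split; apply/forallP => x; rewrite permM.
  by rewrite Eg Eh.
by rewrite (blkE Bg) (blkE Bh) -(psiE Bg) -(psiE Bh) (phi_fix _ Ch Ph) (phi_fix _ Cg Pg).
Qed.
Canonical Lgroup := Group L_group.

Definition pp (g : {perm St3}) := phi (psi g).
Lemma ppM : {in Wset &, {morph pp : x y / x * y}}.
Proof. by move=> x y; rewrite !inE => /and5P [Bx Cx _ _ _] /and5P [By Cy _ _ _]; rewrite /pp psiM // phiM. Qed.
Canonical ppMorph := Morphism ppM.
Lemma psiM' : {in Wset &, {morph psi : x y / x * y}}.
Proof. by move=> x y; rewrite !inE => /and5P [Bx _ _ _ _] /and5P [By _ _ _ _]; rewrite psiM. Qed.
Canonical psiMorph := Morphism psiM'.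

Lemma G3inW g : g \in G3 -> g \in Wset. Proof. exact: (subsetP G3W). Qed.
Lemma HinG3 g : g \in Hg -> g \in G3. Proof. by rewrite in_setI => /andP []. Qed.
Lemma HinP g : g \in Hg -> g \in Pset. Proof. by rewrite in_setI => /andP []. Qed.
Lemma QinH g : g \in Qg -> g \in Hg. Proof. by rewrite in_setI => /andP []. Qed.
Lemma QinO g : g \in Qg -> g \in Oset. Proof. by rewrite in_setI => /andP []. Qed.

Lemma LxH l x : l \in Lsub -> x \in Hg -> l ^ x \in Lsub.
Proof.
move=> Ll Hx; have [Gl _ El] := Lfacts Ll.
have Hl := subsetP L_sub_H l Ll.
apply: LA; first by rewrite groupJ // HinG3.
  by apply: HinP; rewrite groupJ.
have := morphJ ppMorph (G3inW Gl) (G3inW (HinG3 Hx)).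
by rewrite /= /pp => ->; rewrite El conj1g.
Qed.

Lemma normLQ : Qg \subset 'N(Lsub).
Proof.
apply/subsetP => q Qq; rewrite inE; apply/subsetP => y; rewrite mem_conjg => Hy.
by rewrite -(conjgKV q y); apply: LxH Hy (QinH Qq).
Qed.

Lemma TI_LQ : Lsub :&: Qg = 1.
Proof.
apply/trivgP/subsetP => g; rewrite in_setI => /andP [Lg Qq]; rewrite inE; apply/eqP.
have [G He E] := Lfacts Lg; exact: LB G (QinO Qq) He E.
Qed.

Lemma qlift ci w : checkq (ci, w) -> exists2 q, q \in Qg & pp q = tperm c0 ci.
Proof.
rewrite /checkq => /and5P [Hne Hw /allP He /allP Hr /allP Hp].
have G := prodw_G3 Hw; have [Bq Cq _ Oq _] := G3facts G.
have Pq : pp (prodw w) = tperm c0 ci.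
  apply/permP => p; apply: val_inj; rewrite /pp (phiE Cq (sptE p)) psiE // /fpsi prodwE //.
  by rewrite rtpE; apply/esym/eqP; exact: (Hp p (CPl_all p)).
exists (prodw w) => //.
rewrite !in_setI G /=; apply/andP; split.
  rewrite inE Bq /=; apply/forallP => e; rewrite prodwE // (eqP (He e (stkl_all e))).
  by rewrite Oq -/(pp _) Pq odd_tperm (eq_sym c0 ci) Hne.
rewrite inE Bq /=; apply/forallP => c; rewrite /fpsi prodwE //; exact: (Hr c (stkl_all c)).
Qed.

Lemma tc0 x : exists2 q, q \in Qg & pp q = tperm c0 x.
Proof.
move/andP: checkq_ok => [/allP Hq /allP Hcov].
case/orP: (Hcov x (CPl_all x)) => [/eqP ->|].
  by exists 1; [exact: group1 | rewrite /pp psi1 phi1 tperm1].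
case/hasP => [[ci w] Ht /= /eqP Eci]; subst ci; apply: qlift; exact: Hq _ Ht.
Qed.

Lemma QinW q : q \in Qg -> q \in Wset.
Proof. by move=> Qq; apply/G3inW/HinG3/QinH. Qed.

Lemma surj p : exists2 q, q \in Qg & pp q = p.
Proof.
have tin : forall x, tperm c0 x \in ppMorph @* Qg.
  move=> x; have [q Qq <-] := tc0 x; exact: mem_morphim (QinW Qq) Qq.
have tall : forall x y, tperm x y \in ppMorph @* Qg.
  move=> x y; case: (eqVneq y c0) => [->|Hy]; first by rewrite tpermC.
  case: (eqVneq x y) => [->|Hxy]; first by rewrite tperm1 group1.
  case: (eqVneq x c0) => [->|Hx]; first exact: tin.
  have -> : tperm x y = (tperm c0 y) ^ (tperm c0 x).
    by rewrite tpermJ tpermL tpermD // (eq_sym c0 y).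
  by rewrite groupJ ?tin.
have [ts -> _] := prod_tpermP p.
have : \prod_(t <- ts) tperm t.1 t.2 \in ppMorph @* Qg.
  by apply: group_prod => t _; exact: tall.
by case/morphimP => q Wq Qq ->; exists q.
Qed.

Lemma odd_gen2 i : (i < 6)%N -> odd_perm (gen2 i) = true.
Proof.
move=> Hi; case E: (gd i) => [[ts ps] w]; have [[_ _ A3 A4 _] _] := gen_split Hi E.
have -> : gen2 i = tprod ts by apply/permP => c; rewrite gen2E // tprodE A3.
by rewrite odd_tprod.
Qed.

Lemma hlift i : (i < 6)%N -> exists2 h, h \in Hg & psi h = gen2 i.
Proof.
move=> Hi; case E: (gd i) => [[ts ps] w]; have [_ [_ _ _ Hw [He Hc]]] := gen_split Hi E.
have G := prodw_G3 Hw; have [Bq _ _ _ _] := G3facts G.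
have Pq : psi (prodw w) = gen2 i.
  by apply/permP => c; rewrite psiE // /fpsi prodwE // gen2E // -Hc.
exists (prodw w) => //.
rewrite in_setI G /= inE Bq /=; apply/forallP => e; rewrite prodwE // He.
by rewrite Pq odd_gen2.
Qed.

Lemma beta_q q : q \in Qg -> beta q = sigma (pp q).
Proof.
move=> Qq; have G := HinG3 (QinH Qq); have [Bq _ _ Oq _] := G3facts G.
move: (HinP (QinH Qq)); rewrite inE => /andP [_ /forallP Eq].
rewrite /sigma -/(pp q) -Oq /beta.
case Ho: (odd_perm (psi q)).
  rewrite -(mkperm_perm (tperm pos_b pos_c)); apply: mkperm_ext => p.
  have -> : [pick r : EP | [exists e : ES, (pos e == val p) && match q (inr e) with inr e' => pos e' == val r | inl _ => false end]]
          = [pick r : EP | [exists e : ES, (pos e == val p) && (pos (taue e) == val r)]].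
    by apply: eq_pick => r; apply: eq_existsb => e; rewrite (eqP (Eq e)) Ho.
  apply: val_inj; rewrite tauP.
  exact: (posFE (f := taue) (@tau_cpt) (eptE p)).
rewrite -(mkperm_perm 1); apply: mkperm_ext => p.
have -> : [pick r : EP | [exists e : ES, (pos e == val p) && match q (inr e) with inr e' => pos e' == val r | inl _ => false end]]
        = [pick r : EP | [exists e : ES, (pos e == val p) && (pos ((fun x => x) e) == val r)]].
  by apply: eq_pick => r; apply: eq_existsb => e; rewrite (eqP (Eq e)) Ho.
apply: val_inj; rewrite perm1 -{2}(eptE p).
exact: (posFE (f := fun x => x) (fun s s' E => E) (eptE p)).
Qed.

Local Close Scope group_scope.

Theorem theorem3p10 :
  exists Q H : {group {perm St3}},
    [/\ Q \subset G3, (Q :&: kerAlpha = 1)%g & [set alpha q | q in Q] = Sset] /\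
    (Lsub ><| Q = H)%g /\ H \subset G3 /\
    [/\ {in H &, {morph psi : x y / (x * y)%g}},
        {in H &, injective psi}
      & psi @: H = G2].
Proof.
Local Open Scope group_scope.
exists Qg, Hg; split; [split|split; [|split; [|split]]].
- by apply: subset_trans (subsetIl _ _) (subsetIl _ _).
- apply/eqP; rewrite eqEsubset; apply/andP; split; last first.
    have Ep : pp 1 = 1 by rewrite /pp psi1 phi1.
    rewrite sub1set in_setI group1 /= inE group1 /= /alpha beta_q ?group1 //.
    by rewrite -/(pp 1) Ep /sigma odd_perm1.
  apply/subsetP => g; rewrite in_setI => /andP [Qq]; rewrite inE => /andP [G /eqP Ea].
  rewrite inE; apply/eqP.
  have E : pp g = 1 by move: Ea; rewrite /alpha => -[_ E1]; exact: E1.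
  have [_ _ _ Og _] := G3facts G.
  have He : forall e, g (inr e) = inr e.
    move=> e; move: (HinP (QinH Qq)); rewrite inE => /andP [_ /forallP /(_ e) /eqP ->].
    by rewrite Og -/(pp g) E odd_perm1.
  exact: LB G (QinO Qq) He E.
- apply/setP => x; apply/imsetP/imsetP.
    by case=> q Qq ->; exists (pp q) => //; rewrite /alpha beta_q.
  case=> p _ ->; have [q Qq Eq] := surj p; exists q => //.
  by rewrite /alpha beta_q // -/(pp q) Eq.
- rewrite (sdprodE (K := Lgroup) normLQ TI_LQ) /=.
  apply/eqP; rewrite eqEsubset; apply/andP; split.
    by apply: mul_subG; [exact: L_sub_H | apply/subsetP => q /QinH].
  apply/subsetP => h Hh; have [q Qq Eq] := surj (pp h).
  have Hq := QinH Qq.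
  have Hl : h * q^-1 \in Hg by rewrite groupM ?groupV.
  have Ll : h * q^-1 \in Lsub.
    apply: LA; [exact: HinG3 | exact: HinP |]; change (pp (h * q^-1) = 1).
    have := morphM ppMorph (G3inW (HinG3 Hh)) (G3inW (HinG3 (groupVr Hq))).
    rewrite /= => ->; rewrite (morphV ppMorph (G3inW (HinG3 Hq))) /= Eq mulgV //.
  by rewrite -(mulgKV q h); apply: mem_mulg.
- exact: subsetIl.
- move=> x y Hx Hy; have [Bx _ _ _ _] := G3facts (HinG3 Hx); have [By _ _ _ _] := G3facts (HinG3 Hy).
  exact: psiM.
- move=> x y Hx Hy E; have [Bx _ _ _ _] := G3facts (HinG3 Hx); have [By _ _ _ _] := G3facts (HinG3 Hy).
  move: (HinP Hx) (HinP Hy); rewrite !inE => /andP [_ /forallP Px] /andP [_ /forallP Py].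
  apply/permP => -[c|e].
    by rewrite (blkE Bx) (blkE By) -(psiE Bx) -(psiE By) E.
  by rewrite (eqP (Px e)) (eqP (Py e)) E.
- have HW : Hg \subset Wset by apply/subsetP => h /HinG3 /G3inW.
  rewrite -(morphimEsub psiMorph HW).
  apply/eqP; rewrite eqEsubset; apply/andP; split.
    apply/subsetP => _ /morphimP [h _ Hh ->] /=.
    by have [_ _ _ _ ?] := G3facts (HinG3 Hh).
  rewrite /G2 gen_subG; apply/subsetP => x /G2_gens [i Hi ->].
  have [h Hh <-] := hlift Hi.
  exact: mem_morphim (subsetP HW h Hh) Hh.
Qed.
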